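(* For every countable group $G$ there is a proper left-invariant metric $d_G$ on $G$ such that $\operatorname{asdim}_{AN}(G,d_G)=\operatorname{asdim}(G)$.
   Context: For a countable group $G$, $\operatorname{asdim}(G)$ denotes $\operatorname{asdim}(G,d)$ for any proper left-invariant metric $d$ (it does not depend on the choice). A metric on $G$ is proper if bounded sets are finite, left-invariant if $d(gx,gy)=d(x,y)$. For a metric space $X$: $\operatorname{asdim}(X)\le n$ iff for every $r>0$ there are $D<\infty$ and families $\mathcal U_1,\dots,\mathcal U_{n+1}$ of subsets covering $X$, each $r$-disjoint (points in different members of the same family at distance $\ge r$), with members of diameter $\le D$; $\operatorname{asdim}_{AN}(X)\le n$ iff there are $b,c\ge0$ such that this holds with $D=cr+b$ for all $r>0$. *)

(* Defs.v *)
From Stdlib Require Import Reals.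
Open Scope R_scope.

Record is_group (G : Type) (mul : G -> G -> G) (one : G) (inv : G -> G) : Prop := {
  grp_assoc : forall x y z, mul x (mul y z) = mul (mul x y) z;
  grp_onel  : forall x, mul one x = x;
  grp_oner  : forall x, mul x one = x;
  grp_invl  : forall x, mul (inv x) x = one;
  grp_invr  : forall x, mul x (inv x) = one
}.

Definition countable (G : Type) : Prop :=
  exists f : G -> nat, forall x y, f x = f y -> x = y.

Record is_metric (X : Type) (d : X -> X -> R) : Prop := {
  met_nonneg : forall x y, 0 <= d x y;
  met_zero   : forall x y, d x y = 0 <-> x = y;
  met_sym    : forall x y, d x y = d y x;
  met_tri    : forall x y z, d x z <= d x y + d y z
}.

Definition bounded_set {X : Type} (d : X -> X -> R) (A : X -> Prop) : Prop :=
  exists x0 r, forall y, A y -> d x0 y <= r.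

Definition finite_set {X : Type} (A : X -> Prop) : Prop :=
  exists l : list X, forall y, A y -> List.In y l.

Definition proper_metric {X : Type} (d : X -> X -> R) : Prop :=
  forall A : X -> Prop, bounded_set d A -> finite_set A.

Definition left_invariant {G : Type} (mul : G -> G -> G) (d : G -> G -> R) : Prop :=
  forall g x y, d (mul g x) (mul g y) = d x y.

Definition family (X : Type) := (X -> Prop) -> Prop.

Definition r_disjoint {X : Type} (d : X -> X -> R) (r : R) (U : family X) : Prop :=
  forall A B, U A -> U B -> A <> B -> forall x y, A x -> B y -> r <= d x y.

Definition members_diam_le {X : Type} (d : X -> X -> R) (D : R) (U : family X) : Prop :=
  forall A, U A -> forall x y, A x -> A y -> d x y <= D.

Definition good_cover {X : Type} (d : X -> X -> R) (n : nat) (r D : R) : Prop :=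
  exists U : nat -> family X,
    (forall x, exists i, (i < S n)%nat /\ exists A, U i A /\ A x) /\
    (forall i, (i < S n)%nat -> r_disjoint d r (U i)) /\
    (forall i, (i < S n)%nat -> members_diam_le d D (U i)).

Definition asdim_le {X : Type} (d : X -> X -> R) (n : nat) : Prop :=
  forall r, 0 < r -> exists D, good_cover d n r D.

Definition asdimAN_le {X : Type} (d : X -> X -> R) (n : nat) : Prop :=
  exists b c, 0 <= b /\ 0 <= c /\ forall r, 0 < r -> good_cover d n r (c * r + b).

(* Main.v *)
Require Import Defs.
From Stdlib Require Import Reals Lia Lra Arith ZArith Wf_nat List Classical ClassicalEpsilon.
Open Scope R_scope.

Lemma inv_uniq G mul one inv (HG : is_group G mul one inv) a b :
  mul a b = one -> b = inv a.
Proof.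
  intro H. rewrite <- (grp_onel _ _ _ _ HG b), <- (grp_invl _ _ _ _ HG a).
  rewrite <- (grp_assoc _ _ _ _ HG), H, (grp_oner _ _ _ _ HG). reflexivity.
Qed.

Lemma inv_inv G mul one inv (HG : is_group G mul one inv) x : inv (inv x) = x.
Proof. symmetry. apply (inv_uniq _ _ _ _ HG). apply (grp_invl _ _ _ _ HG). Qed.

Lemma inv_mul G mul one inv (HG : is_group G mul one inv) x y :
  inv (mul x y) = mul (inv y) (inv x).
Proof.
  symmetry. apply (inv_uniq _ _ _ _ HG).
  rewrite <- (grp_assoc _ _ _ _ HG). rewrite (grp_assoc _ _ _ _ HG y).
  rewrite (grp_invr _ _ _ _ HG), (grp_onel _ _ _ _ HG), (grp_invr _ _ _ _ HG). reflexivity.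
Qed.

Lemma mul_inv_cancel G mul one inv (HG : is_group G mul one inv) x y :
  mul (inv x) (mul x y) = y.
Proof. rewrite (grp_assoc _ _ _ _ HG), (grp_invl _ _ _ _ HG), (grp_onel _ _ _ _ HG). reflexivity. Qed.

Lemma mul_cancel_inv G mul one inv (HG : is_group G mul one inv) x y :
  mul x (mul (inv x) y) = y.
Proof. rewrite (grp_assoc _ _ _ _ HG), (grp_invr _ _ _ _ HG), (grp_onel _ _ _ _ HG). reflexivity. Qed.

Inductive reach {G} (mul : G -> G -> G) (one : G) (w : G -> nat) : nat -> G -> Prop :=
| r_one : forall n, reach mul one w n one
| r_cons : forall n s g, reach mul one w n g -> reach mul one w (w s + n) (mul s g).

Lemma reach_mono {G} mul one w n m (g : G) : reach mul one w n g -> (n <= m)%nat -> reach mul one w m g.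
Proof.
  intros H; revert m; induction H; intros m Hm. constructor.
  replace m with (w s + (m - w s))%nat by lia. constructor. apply IHreach. lia.
Qed.

Lemma reach_concat G mul one inv (HG : is_group G mul one inv) w a b g h :
  reach mul one w a g -> reach mul one w b h -> reach mul one w (a + b) (mul g h).
Proof.
  intros H1 H2; induction H1.
  - rewrite (grp_onel _ _ _ _ HG). apply reach_mono with b; auto. lia.
  - rewrite <- (grp_assoc _ _ _ _ HG). rewrite <- Nat.add_assoc. constructor. auto.
Qed.

Lemma reach_inv G mul one inv (HG : is_group G mul one inv) w
  (Hw : forall s, w (inv s) = w s) n g :
  reach mul one w n g -> reach mul one w n (inv g).
Proof.
  induction 1.
  - replace (inv one) with one. constructor.
    apply (inv_uniq _ _ _ _ HG). apply (grp_onel _ _ _ _ HG).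
  - rewrite (inv_mul _ _ _ _ HG). rewrite Nat.add_comm. apply (reach_concat _ _ _ _ HG); auto.
    rewrite <- (grp_oner _ _ _ _ HG (inv s)). rewrite <- Hw. replace (w (inv s)) with (w (inv s) + 0)%nat by lia.
    constructor. constructor.
Qed.

Lemma reach_pos {G} mul one w (Hw : forall s:G, (1 <= w s)%nat) g : reach mul one w 0 g -> g = one.
Proof. intro H. inversion H; auto. specialize (Hw s). lia. Qed.

Lemma reach_inv_cases {G} mul one w n (g : G) : reach mul one w n g ->
  g = one \/ exists s h, (w s <= n)%nat /\ reach mul one w (n - w s) h /\ g = mul s h.
Proof.
  intro H; inversion H; auto. right. exists s, g0. split. lia. split; auto.
  replace (w s + n0 - w s)%nat with n0 by lia. auto.
Qed.

Lemma fin_sub {X} (A B : X -> Prop) : finite_set B -> (forall x, A x -> B x) -> finite_set A.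
Proof. intros [l Hl] H. exists l. auto. Qed.

Lemma fin_union_list {X Y} (L : list X) (P : X -> Y -> Prop) :
  (forall s, In s L -> finite_set (P s)) -> finite_set (fun g => exists s, In s L /\ P s g).
Proof.
  induction L as [|a L IH]; intros H.
  - exists nil. intros y [s [[] _]].
  - destruct (H a (or_introl eq_refl)) as [la Hla].
    destruct IH as [l Hl]. { intros s Hs. apply H. right; auto. }
    exists (la ++ l). intros y [s [[<-|Hs] Hp]]; apply in_or_app; [left|right]; eauto.
Qed.

Lemma fin_image {X Y} (A : X -> Prop) (f : X -> Y) :
  finite_set A -> finite_set (fun y => exists x, A x /\ y = f x).
Proof. intros [l Hl]. exists (map f l). intros y [x [Hx ->]]. apply in_map. auto. Qed.

Lemma fin_e {G} (e : G -> nat) (He : forall x y, e x = e y -> x = y) R :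
  finite_set (fun s => (e s <= R)%nat).
Proof.
  induction R as [|R IH].
  - destruct (classic (exists s, e s = 0%nat)) as [[s Hs]|Hn].
    + exists (s :: nil). intros y Hy. left. apply He. lia.
    + exists nil. intros y Hy. apply Hn. exists y. lia.
  - destruct IH as [l Hl].
    destruct (classic (exists s, e s = S R)) as [[s Hs]|Hn].
    + exists (s :: l). intros y Hy. destruct (Nat.eq_dec (e y) (S R)).
      * left. apply He. lia.
      * right. apply Hl. lia.
    + exists l. intros y Hy. apply Hl. destruct (Nat.eq_dec (e y) (S R)).
      * exfalso; apply Hn; eauto.
      * lia.
Qed.

Lemma fin_reach {G} mul (one : G) (w : G -> nat) (e : G -> nat)
  (He : forall x y, e x = e y -> x = y) (Hw : forall s, (1 <= w s)%nat) (Hwe : forall s, (e s <= w s)%nat) R :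
  finite_set (reach mul one w R).
Proof.
  induction R as [R IH] using (well_founded_induction lt_wf).
  destruct (fin_e e He R) as [L HL].
  assert (Hf : finite_set (fun g => exists s, In s L /\ (fun s y => exists h, (reach mul one w (R - w s) h /\ w s <= R)%nat /\ y = mul s h) s g)).
  { apply fin_union_list. intros s Hs.
    destruct (le_lt_dec (w s) R) as [Hle|Hlt].
    - apply (fin_image (fun h => reach mul one w (R - w s) h /\ (w s <= R)%nat) (mul s)).
      apply fin_sub with (reach mul one w (R - w s)). apply IH. specialize (Hw s); lia. tauto.
    - exists nil. intros y [h [[_ Hc] _]]. lia. }
  destruct Hf as [l Hl]. exists (one :: l). intros y Hy.
  destruct (reach_inv_cases mul one w R y Hy) as [->|[s [h [Hs [Hh ->]]]]].
  - left; auto.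
  - right. apply Hl. exists s. split. apply HL. specialize (Hwe s). lia.
    exists h. auto.
Qed.
Local Open Scope nat_scope.

Fixpoint Tt (Hf : nat -> nat) (k : nat) : nat :=
  match k with 0 => 0 | S k' => match k' with 0 => 1 | _ => Hf (Tt Hf k') end end.

Fixpoint fm (Hf : nat -> nat) (x b : nat) : nat :=
  match b with 0 => 0 | S b' => if Tt Hf (S b') <=? x then S b' else fm Hf x b' end.

Definition ff Hf x := fm Hf x x.

Lemma Tt_S Hf (HH : forall t, 2*t+1 <= Hf t) k : Tt Hf k < Tt Hf (S k).
Proof. destruct k. simpl; lia. destruct k. simpl. specialize (HH 1); lia.
  change (Tt Hf (S (S (S k)))) with (Hf (Tt Hf (S (S k)))). specialize (HH (Tt Hf (S (S k)))). lia. Qed.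

Lemma Tt_mono Hf (HH : forall t, 2*t+1 <= Hf t) i j : i <= j -> Tt Hf i <= Tt Hf j.
Proof. induction 1. lia. pose proof (Tt_S Hf HH m). lia. Qed.

Lemma Tt_ge Hf (HH : forall t, 2*t+1 <= Hf t) k : k <= Tt Hf k.
Proof. induction k. simpl; lia. pose proof (Tt_S Hf HH k). lia. Qed.

Lemma Tt_SS Hf k : 1 <= k -> Tt Hf (S k) = Hf (Tt Hf k).
Proof. intros. destruct k. lia. reflexivity. Qed.

Lemma fm_spec Hf x b : fm Hf x b = 0 \/ Tt Hf (fm Hf x b) <= x.
Proof. induction b; [simpl; auto|]. change (fm Hf x (S b)) with (if Tt Hf (S b) <=? x then S b else fm Hf x b).
  destruct (Tt Hf (S b) <=? x) eqn:E.
  right. apply Nat.leb_le in E. exact E. auto. Qed.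

Lemma fm_ge Hf x b j : j <= b -> Tt Hf j <= x -> j <= fm Hf x b.
Proof. induction b; intros Hj HT. simpl; lia.
  change (fm Hf x (S b)) with (if Tt Hf (S b) <=? x then S b else fm Hf x b).
  destruct (Tt Hf (S b) <=? x) eqn:E. lia.
  apply Nat.leb_gt in E. assert (j <> S b) by (intro; subst; lia). apply IHb; auto. lia. Qed.

Lemma L1 Hf (HH : forall t, 2*t+1 <= Hf t) x j : Tt Hf j <= x -> j <= ff Hf x.
Proof. intros. apply fm_ge; auto. pose proof (Tt_ge Hf HH j). lia. Qed.

Lemma L2 Hf (HH : forall t, 2*t+1 <= Hf t) x j : x < Tt Hf j -> ff Hf x < j.
Proof. intros H. unfold ff. destruct (fm_spec Hf x x) as [E|E].
  rewrite E. destruct j. simpl in H; lia. lia.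
  destruct (le_lt_dec j (fm Hf x x)); auto. pose proof (Tt_mono Hf HH _ _ l). lia. Qed.

Lemma ff_mono Hf (HH : forall t, 2*t+1 <= Hf t) x y : x <= y -> ff Hf x <= ff Hf y.
Proof. intros. unfold ff at 1. destruct (fm_spec Hf x x) as [E|E]. rewrite E; lia.
  apply L1; auto. lia. Qed.

Lemma ff_zero Hf (HH : forall t, 2*t+1 <= Hf t) x : ff Hf x = 0 <-> x = 0.
Proof. split; intro H.
  destruct x; auto. assert (1 <= ff Hf (S x)). apply L1; auto. simpl. lia. lia.
  subst. assert (ff Hf 0 < 1). apply L2; auto. lia. Qed.

Lemma ff_sub Hf (HH : forall t, 2*t+1 <= Hf t) a b : ff Hf (a + b) <= ff Hf a + ff Hf b.
Proof.
  assert (Hw : forall a b, a <= b -> ff Hf (a + b) <= ff Hf a + ff Hf b).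
  { clear a b. intros a b Hab. destruct a. simpl. lia.
    assert (1 <= ff Hf (S a)). apply L1; auto. simpl; lia.
    set (k := ff Hf b).
    assert (b < Tt Hf (S k)). { destruct (le_lt_dec (Tt Hf (S k)) b); auto.
      apply (L1 Hf HH) in l. unfold k in l. lia. }
    assert (S a + b < Tt Hf (S (S k))). { rewrite Tt_SS by lia. specialize (HH (Tt Hf (S k))). lia. }
    apply (L2 Hf HH) in H1. lia. }
  destruct (le_lt_dec a b). auto. rewrite Nat.add_comm, (Nat.add_comm (ff Hf a)). apply Hw. lia.
Qed.
Local Open Scope R_scope.

Lemma cover_mono_D {X} (d : X -> X -> R) n r D D' : good_cover d n r D -> D <= D' -> good_cover d n r D'.
Proof. intros [U [H1 [H2 H3]]] HD. exists U. split; auto. split; auto.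
  intros i Hi A HA x y Hx Hy. specialize (H3 i Hi A HA x y Hx Hy). lra. Qed.

Lemma nat_ceil r : 0 < r -> exists k : nat, r <= INR k /\ INR k <= r + 1.
Proof. intros Hr. destruct (archimed r) as [H1 H2].
  assert (0 < IZR (up r)) by lra. apply lt_0_IZR in H.
  exists (Z.to_nat (up r)). rewrite INR_IZR_INZ, Z2Nat.id by lia. lra. Qed.

Lemma nat_above r : exists k : nat, r <= INR k.
Proof. destruct (Rle_lt_dec r 0). exists 0%nat. simpl; lra.
  destruct (nat_ceil r r0) as [k [H _]]. eauto. Qed.

Lemma back_part {X} (d : X -> X -> nat) Hf (HH : forall t, (2*t+1 <= Hf t)%nat) n :
  asdim_le (fun x y => INR (ff Hf (d x y))) n ->
  forall t, exists D : nat, good_cover (fun x y => INR (d x y)) n (INR t) (INR D).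
Proof.
  intros Has t. destruct (Has (INR (ff Hf t) + 1)) as [D' [U [H1 [H2 H3]]]].
  { pose proof (pos_INR (ff Hf t)). lra. }
  destruct (nat_above D') as [K HK].
  exists (Tt Hf (S K)). exists U. split; auto. split.
  - intros i Hi A B HA HB HAB x y Hx Hy. specialize (H2 i Hi A B HA HB HAB x y Hx Hy).
    apply le_INR. destruct (le_lt_dec t (d x y)); auto.
    assert (ff Hf (d x y) <= ff Hf t)%nat by (apply ff_mono; auto; lia).
    apply le_INR in H. lra.
  - intros i Hi A HA x y Hx Hy. specialize (H3 i Hi A HA x y Hx Hy).
    apply le_INR. destruct (le_lt_dec (d x y) (Tt Hf (S K))); auto.
    assert (S K <= ff Hf (d x y))%nat by (apply L1; auto; lia).
    apply le_INR in H. rewrite S_INR in H. lra.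
Qed.

Lemma AN_part {X} (d : X -> X -> nat) Hf (HH : forall t, (2*t+1 <= Hf t)%nat) n :
  (forall t, (n <= t)%nat -> good_cover (fun x y => INR (d x y)) n (INR t) (INR (Hf t))) ->
  asdimAN_le (fun x y => INR (ff Hf (d x y))) n.
Proof.
  intros Hc. exists (INR n + 3), 1. split. pose proof (pos_INR n); lra. split. lra.
  intros r Hr. destruct (nat_ceil r Hr) as [k0 [Hk1 Hk2]].
  set (k := Nat.max (Nat.max k0 1) n).
  assert (Hk : INR k <= INR k0 + 1 + INR n).
  { rewrite <- S_INR, <- plus_INR. apply le_INR. unfold k. lia. }
  assert (Hk0 : INR k0 <= INR k) by (apply le_INR; unfold k; lia).
  assert (Hnk : (n <= Tt Hf k)%nat) by (pose proof (Tt_ge Hf HH k); unfold k in *; lia).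
  destruct (Hc _ Hnk) as [U [H1 [H2 H3]]].
  exists U. split; auto. split.
  - intros i Hi A B HA HB HAB x y Hx Hy. specialize (H2 i Hi A B HA HB HAB x y Hx Hy).
    apply INR_le in H2. apply (L1 Hf HH) in H2. apply le_INR in H2. lra.
  - intros i Hi A HA x y Hx Hy. specialize (H3 i Hi A HA x y Hx Hy).
    apply INR_le in H3. rewrite <- Tt_SS in H3 by (unfold k; lia).
    assert (d x y < Tt Hf (S (S k)))%nat by (pose proof (Tt_S Hf HH (S k)); lia).
    apply (L2 Hf HH) in H. assert (ff Hf (d x y) <= S k)%nat by lia. apply le_INR in H0.
    rewrite S_INR in H0. lra.
Qed.

Fixpoint sumD (D : nat -> nat -> nat) (t j : nat) : nat :=
  match j with 0 => D 0%nat t | S j' => (D j t + sumD D t j')%nat end.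

Lemma sumD_ge D t j m : (m <= j)%nat -> (D m t <= sumD D t j)%nat.
Proof. induction j; intros H; simpl. replace m with 0%nat by lia. lia.
  destruct (Nat.eq_dec m (S j)). subst; lia. specialize (IHj ltac:(lia)). lia. Qed.

Theorem mainTheorem18 (G : Type) (mul : G -> G -> G) (one : G) (inv : G -> G)
  (HG : is_group G mul one inv) (Hc : countable G) :
  exists dG : G -> G -> R,
    is_metric G dG /\ proper_metric dG /\ left_invariant mul dG /\
    (forall n : nat, asdimAN_le dG n <-> asdim_le dG n).
Proof.
  destruct Hc as [e He].
  pose (w := fun s => (e s + e (inv s) + 1)%nat).
  assert (Hwi : forall s, w (inv s) = w s).
  { intro s. unfold w. rewrite (inv_inv _ _ _ _ HG). lia. }
  assert (Hw1 : forall s, (1 <= w s)%nat) by (intro; unfold w; lia).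
  assert (Hwe : forall s, (e s <= w s)%nat) by (intro; unfold w; lia).
  assert (Hmin : forall g, exists n, reach mul one w n g /\ forall m, reach mul one w m g -> (n <= m)%nat).
  { intro g. destruct (dec_inh_nat_subset_has_unique_least_element (fun n => reach mul one w n g))
      as [n [[Hn1 Hn2] _]].
    - intro n; apply classic.
    - exists (w g + 0)%nat. rewrite <- (grp_oner _ _ _ _ HG g) at 2. constructor. constructor.
    - exists n; auto. }
  pose (N := fun g => proj1_sig (constructive_indefinite_description _ (Hmin g))).
  assert (HN1 : forall g, reach mul one w (N g) g).
  { intro g. unfold N. exact (proj1 (proj2_sig (constructive_indefinite_description _ (Hmin g)))). }
  assert (HN2 : forall g m, reach mul one w m g -> (N g <= m)%nat).
  { intros g. unfold N. exact (proj2 (proj2_sig (constructive_indefinite_description _ (Hmin g)))). }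
  clearbody N.
  assert (HNinv : forall g, N (inv g) = N g).
  { intro g. apply Nat.le_antisymm.
    - apply HN2. apply (reach_inv _ _ _ _ HG); auto.
    - pose proof (reach_inv _ _ _ _ HG w Hwi _ _ (HN1 (inv g))) as H.
      rewrite (inv_inv _ _ _ _ HG) in H. apply HN2. exact H. }
  pose (d := fun x y => N (mul (inv x) y)).
  assert (dzero : forall x y, d x y = 0%nat <-> x = y).
  { intros x y; unfold d; split; intro H.
    - assert (Hr : reach mul one w 0 (mul (inv x) y)) by (rewrite <- H; auto).
      apply (reach_pos mul one w Hw1) in Hr. apply (inv_uniq _ _ _ _ HG) in Hr.
      rewrite (inv_inv _ _ _ _ HG) in Hr. auto.
    - subst. rewrite (grp_invl _ _ _ _ HG). specialize (HN2 one 0%nat (r_one _ _ _ _)). lia. }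
  assert (dsym : forall x y, d x y = d y x).
  { intros x y; unfold d. rewrite <- HNinv, (inv_mul _ _ _ _ HG), (inv_inv _ _ _ _ HG). auto. }
  assert (dtri : forall x y z, (d x z <= d x y + d y z)%nat).
  { intros x y z; unfold d. apply HN2.
    replace (mul (inv x) z) with (mul (mul (inv x) y) (mul (inv y) z)).
    apply (reach_concat _ _ _ _ HG); auto.
    rewrite <- (grp_assoc _ _ _ _ HG), (mul_cancel_inv _ _ _ _ HG). auto. }
  assert (dinv : forall g x y, d (mul g x) (mul g y) = d x y).
  { intros g x y; unfold d. rewrite (inv_mul _ _ _ _ HG), <- (grp_assoc _ _ _ _ HG),
      (mul_inv_cancel _ _ _ _ HG). auto. }
  assert (dprop : forall x0 K, finite_set (fun y => (d x0 y <= K)%nat)).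
  { intros x0 K. apply fin_sub with (fun y => exists h, reach mul one w K h /\ y = mul x0 h).
    apply fin_image. apply (fin_reach mul one w e He Hw1 Hwe).
    intros y Hy. exists (mul (inv x0) y). split.
    apply reach_mono with (d x0 y); auto. apply HN1.
    rewrite (mul_cancel_inv _ _ _ _ HG). auto. }
  clearbody d.
  pose (d0 := fun x y => INR (d x y)).
  pose (Dc := fun n t => epsilon (inhabits 0%nat) (fun D => good_cover d0 n (INR t) (INR D))).
  pose (Hf := fun t => (2*t+1 + sumD Dc t t)%nat).
  assert (HH : forall t, (2*t+1 <= Hf t)%nat) by (intro; unfold Hf; lia).
  exists (fun x y => INR (ff Hf (d x y))).
  split; [|split; [|split]].
  - split.
    + intros; apply pos_INR.
    + intros x y. split; intro H.
      * apply dzero. apply (ff_zero Hf HH). apply INR_eq. simpl. exact H.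
      * apply dzero in H. assert (ff Hf (d x y) = 0%nat) by (apply (ff_zero Hf HH); auto).
        rewrite H0. reflexivity.
    + intros. rewrite dsym. auto.
    + intros x y z. rewrite <- plus_INR. apply le_INR.
      eapply Nat.le_trans. apply ff_mono; auto. apply (ff_sub Hf HH).
  - intros A [x0 [r Hr]]. destruct (nat_above r) as [K HK].
    apply fin_sub with (fun y => (d x0 y <= Tt Hf (S K))%nat). apply dprop.
    intros y Hy. specialize (Hr y Hy).
    destruct (le_lt_dec (d x0 y) (Tt Hf (S K))); auto.
    assert (S K <= ff Hf (d x0 y))%nat by (apply L1; auto; lia).
    apply le_INR in H. rewrite S_INR in H. lra.
  - intros g x y. rewrite dinv. auto.
  - intro n. split.
    + intros [b [c [_ [_ H]]]] r Hr. exists (c * r + b). auto.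
    + intro Has. apply AN_part; auto. intros t Hnt.
      assert (Hgc : good_cover d0 n (INR t) (INR (Dc n t))).
      { unfold Dc. apply epsilon_spec. apply (back_part d Hf HH n Has t). }
      apply cover_mono_D with (INR (Dc n t)). exact Hgc.
      apply le_INR. unfold Hf. pose proof (sumD_ge Dc t t n Hnt). lia.
Qed.
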